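(* Assume (A1) and (A2). Let $t_0\le t_1$ and $B>0$ be such that: (1) the sets $\mathcal{U}^{(t)}_{\pm y,\pm}$ and $\mathcal{V}^{(t)}_{\pm y,\pm}$ do not depend on $t\in[t_0,t_1]$; (2) $\max_{r}\langle\mathbf{w}^{(t)}_{y,r},y\mathbf{u}\rangle<B(\beta^*_{\mathbf{u}}m)^{1/2}$ for all $t\in[t_0,t_1]$; (3) $\min_r\langle\mathbf{w}^{(t)}_{-y,r},-y\mathbf{u}\rangle>-0.1$ and $\min_r\langle\mathbf{w}^{(t)}_{-y,r},-y\mathbf{v}\rangle>-0.1$ for all $t\in[t_0,t_1]$; (4) $\frac1m\sum_r\sigma(\langle\mathbf{w}^{(t)}_{y,r},y\mathbf{v}\rangle)<\delta$ for all $t\in[t_0,t_1]$; (5) $-2\le1-yf(\mathbf{x};\mathbf{W}^{(t)})\le1$ for all $t\in[t_0,t_1]$. Then, with $\epsilon=(\delta-\delta(1.05-\delta)^{1/2})/4$, $$\sum_{s=t_0}^{t_1-1}\big(1-yf(\mathbf{x};\mathbf{W}^{(s)})\big)\ge2\epsilon(t_1-t_0)-\frac{mB}{\eta\|\mathbf{u}\|_2^2\sqrt{1.05-\delta}},$$ and for every $r$ with $\langle\mathbf{w}^{(t_0)}_{y,r},y\mathbf{v}\rangle>0$, $$\langle\mathbf{w}^{(t_1)}_{y,r},y\mathbf{v}\rangle\ge\langle\mathbf{w}^{(t_0)}_{y,r},y\mathbf{v}\rangle\exp\Big\{\frac{\eta\|\mathbf{v}\|_2^2\epsilon}{m}(t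_1-t_0)-\frac{\|\mathbf{v}\|_2^2}{\|\mathbf{u}\|_2^2}\cdot\frac{B}{(1.05-\delta)^{1/2}}\Big\}.$$
   Context: Single-data setting: $\mathbf{u},\mathbf{v}\in\mathbb{R}^d$ are fixed nonzero vectors with $\langle\mathbf{u},\mathbf{v}\rangle=0$, $y\in\{\pm1\}$, and the single training example is $(\mathbf{x},y)$ with $\mathbf{x}=(y\mathbf{u},y\mathbf{v})$. Let $\sigma(z)=(\max\{z,0\})^2$ (so $\sigma'(z)=2\max\{z,0\}$). Weights $\mathbf{W}=\{\mathbf{w}_{j,r}\}_{j\in\{\pm1\},r\in[m]}\subset\mathbb{R}^d$; network $f(\mathbf{x};\mathbf{W})=\sum_{j\in\{\pm1\}}jF_j(\mathbf{x};\mathbf{W})$ with $F_j(\mathbf{x};\mathbf{W})=\frac1m\sum_{r\in[m]}[\sigma(\langle\mathbf{w}_{j,r},y\mathbf{u}\rangle)+\sigma(\langle\mathbf{w}_{j,r},y\mathbf{v}\rangle)]$; loss $L(\mathbf{W})=\frac12(f(\mathbf{x};\mathbf{W})-y)^2$. All entries of all $\mathbf{w}^{(0)}_{j,r}$ are i.i.d. $N(0,\sigma_0^2)$, and for $t\ge0$: $\mathbf{w}^{(t+1)}_{j,r}=\mathbf{w}^{(t)}_{j,r}-\frac{\eta j}{m}(f(\mathbf{x};\mathbf{W}^{(t)})-y)\big(\sigma'(\langle\mathbf{w}^{(t)}_{j,r},y\mathbf{u}\rangle)y\mathbf{u}+\sigma'(\langle\mathbf{w}^{(t)}_{j,r},y\mathbf{v}\rangle)y\mathbf{v}\big)$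 with learning rate $\eta>0$. (A1) Conditions: $m/(4\|\mathbf{u}\|_2^2)\le\eta\le2m/(5\|\mathbf{u}\|_2^2)$; $\sigma_0=\tilde\Theta(\max\{\|\mathbf{u}\|_2,\|\mathbf{v}\|_2\}^{-1}d^{-1/2})$; $\|\mathbf{v}\|_2<0.01\|\mathbf{u}\|_2$; $d=\Omega(\mathrm{polylog}(m))$. (A2) Oscillation: there is a constant $\delta\in(0.2,0.8)$ with $|yf(\mathbf{x};\mathbf{W}^{(t)})-1|\ge\delta$ for every $t\ge0$. Neuron sets: for $j\in\{\pm1\}$, $\mathcal{U}^{(t)}_{j,+}=\{r\in[m]:\langle\mathbf{w}^{(t)}_{j,r},j\mathbf{u}\rangle>0\}$, $\mathcal{U}^{(t)}_{j,-}=[m]\setminus\mathcal{U}^{(t)}_{j,+}$; $\mathcal{V}^{(t)}_{j,\pm}$ likewise with $\mathbf{v}$. Here $\beta^*_{\mathbf{u}}=\max_{r}\sigma(\langle\mathbf{w}^{(t_0)}_{y,r},y\mathbf{u}\rangle)/\sum_{r}\sigma(\langle\mathbf{w}^{(t_0)}_{y,r},y\mathbf{u}\rangle)$ (assumed well defined). *)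

(* Defs.v *)
From Stdlib Require Import Reals Lra.
Open Scope R_scope.

(* vectors in R^d are represented as functions nat -> R (only indices < d matter) *)
Definition vec := nat -> R.

Fixpoint rsum (n : nat) (g : nat -> R) : R :=
  match n with O => 0 | S k => rsum k g + g k end.

(* maximum over r < m of g r (for m >= 1; equals g 0 when m = 0) *)
Fixpoint rmax (m : nat) (g : nat -> R) : R :=
  match m with O => g O | S O => g O | S k => Rmax (rmax k g) (g k) end.

Definition inner (d : nat) (a b : vec) : R := rsum d (fun i => a i * b i).
Definition sqnorm (d : nat) (a : vec) : R := inner d a a.
Definition scal (c : R) (a : vec) : vec := fun i => c * a i.

Definition act (z : R) : R := (Rmax z 0) ^ 2.
Definition dact (z : R) : R := 2 * Rmax z 0.

(* weights: W j r is the weight vector w_{j,r}; j is used only for j = 1, -1 *)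
Definition weights := R -> nat -> vec.

(* F_j(x;W) with x = (y u, y v) *)
Definition Fj (d m : nat) (u v : vec) (y : R) (W : weights) (j : R) : R :=
  / INR m * rsum m (fun r => act (inner d (W j r) (scal y u))
                              + act (inner d (W j r) (scal y v))).

Definition fnet (d m : nat) (u v : vec) (y : R) (W : weights) : R :=
  Fj d m u v y W 1 - Fj d m u v y W (-1).

(* one gradient descent step on L(W) = 1/2 (f(x;W) - y)^2 *)
Definition gd_step (d m : nat) (eta : R) (u v : vec) (y : R) (W : weights) : weights :=
  fun j r i =>
    W j r i - eta * j / INR m * (fnet d m u v y W - y) *
      (dact (inner d (W j r) (scal y u)) * (y * u i)
       + dact (inner d (W j r) (scal y v)) * (y * v i)).

Fixpoint traj (d m : nat) (eta : R) (u v : vec) (y : R) (W0 : weights) (t : nat)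
  : weights :=
  match t with
  | O => W0
  | S k => gd_step d m eta u v y (traj d m eta u v y W0 k)
  end.

(* Main.v *)
Require Import Defs.
From Stdlib Require Import Reals Lra Lia Psatz Classical.
Open Scope R_scope.

Lemma rsum_ext n f g : (forall i, (i < n)%nat -> f i = g i) -> rsum n f = rsum n g.
Proof. induction n; intros H; simpl; auto. rewrite IHn, H; auto. Qed.

Lemma rsum_plus n f g : rsum n (fun i => f i + g i) = rsum n f + rsum n g.
Proof. induction n; simpl; [ring|rewrite IHn; ring]. Qed.

Lemma rsum_scal n c f : rsum n (fun i => c * f i) = c * rsum n f.
Proof. induction n; simpl; [ring|rewrite IHn; ring]. Qed.

Lemma rsum_le n f g : (forall i, (i < n)%nat -> f i <= g i) -> rsum n f <= rsum n g.
Proof. induction n; intros H; simpl; [lra|]. pose proof (H n ltac:(lia)).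
 assert (rsum n f <= rsum n g) by (apply IHn; auto). lra. Qed.

Lemma rsum_const n c : rsum n (fun _ => c) = c * INR n.
Proof. induction n; simpl rsum; [simpl; ring| rewrite IHn, S_INR; ring]. Qed.

Lemma rsum_pos_ex n g : 0 < rsum n g -> exists i, (i < n)%nat /\ 0 < g i.
Proof. induction n; simpl; intros H; [lra|].
 destruct (Rlt_dec 0 (g n)). exists n; split; auto.
 destruct IHn as [i [Hi Hg]]. lra. exists i; split; auto. Qed.

Lemma inner_scal_r d a c w : inner d a (scal c w) = c * inner d a w.
Proof. unfold inner, scal. rewrite <- rsum_scal. apply rsum_ext; intros; ring. Qed.

Lemma inner_comm d a b : inner d a b = inner d b a.
Proof. unfold inner. apply rsum_ext; intros; ring. Qed.

Lemma inner_step d m eta u v y W j r w :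
  inner d (gd_step d m eta u v y W j r) w =
  inner d (W j r) w - eta * j / INR m * (fnet d m u v y W - y) *
   (dact (inner d (W j r) (scal y u)) * y * inner d u w
    + dact (inner d (W j r) (scal y v)) * y * inner d v w).
Proof.
  unfold inner at 1, gd_step.
  set (C := eta * j / INR m * (fnet d m u v y W - y)).
  set (D1 := dact (inner d (W j r) (scal y u))).
  set (D2 := dact (inner d (W j r) (scal y v))).
  rewrite (rsum_ext _ _ (fun i => W j r i * w i + ((- C * D1 * y) * (u i * w i)
      + (- C * D2 * y) * (v i * w i)))) by (intros; ring).
  rewrite !rsum_plus, !rsum_scal. unfold inner. ring.
Qed.

Lemma act_nonneg z : 0 <= act z.
Proof. unfold act. nra. Qed.

Lemma act_mono x y : x <= y -> act x <= act y.
Proof. intros. unfold act, Rmax. destruct (Rle_dec x 0), (Rle_dec y 0); nra. Qed.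

Lemma act_pos z : 0 < z -> act z = z ^ 2.
Proof. intros. unfold act. rewrite Rmax_left; lra. Qed.

Lemma act_npos z : z <= 0 -> act z = 0.
Proof. intros. unfold act. rewrite Rmax_right; [ring|lra]. Qed.

Lemma act_small z : z < 0.1 -> act z <= 0.01.
Proof. intros. unfold act, Rmax. destruct (Rle_dec z 0); nra. Qed.

Lemma rmax_ge m g r : (r < m)%nat -> g r <= rmax m g.
Proof.
  induction m; intros H; [lia|].
  destruct m. simpl. assert (r = 0%nat) by lia. subst. lra.
  change (rmax (S (S m)) g) with (Rmax (rmax (S m) g) (g (S m))).
  destruct (Nat.eq_dec r (S m)). subst. apply Rmax_r.
  eapply Rle_trans; [apply IHm; lia| apply Rmax_l].
Qed.

Lemma rmax_act m g : rmax m (fun r => act (g r)) = act (rmax m g).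
Proof.
  induction m. reflexivity. destruct m. reflexivity.
  change (rmax (S (S m)) (fun r => act (g r))) with
    (Rmax (rmax (S m) (fun r => act (g r))) (act (g (S m)))).
  change (rmax (S (S m)) g) with (Rmax (rmax (S m) g) (g (S m))).
  rewrite IHm. unfold Rmax at 2. destruct (Rle_dec (rmax (S m) g) (g (S m))).
  apply Rmax_right. apply act_mono; auto.
  apply Rmax_left. apply act_mono; lra.
Qed.

Lemma exp_quad x : -1/2 <= x -> exp (x - 2 * x^2) <= 1 + x.
Proof.
  intros Hx. pose proof (exp_ineq1_le (-(x - 2*x^2))) as H.
  rewrite exp_Ropp in H. pose proof (exp_pos (x - 2*x^2)) as Hp.
  set (E := exp (x - 2 * x ^ 2)) in *.
  assert (0 < 1 - x + 2*x^2) by nra.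
  assert (H1 : 1 - x + 2*x^2 <= / E) by lra.
  assert (E * (1 - x + 2*x^2) <= 1).
  { apply Rmult_le_compat_l with (r:=E) in H1; [|lra]. rewrite Rinv_r in H1; lra. }
  assert ((1+x)*(1 - x + 2*x^2) >= 1) by nra. nra.
Qed.

Lemma exp_mono x y : x <= y -> exp x <= exp y.
Proof. intros [H|H]. left; apply exp_increasing; auto. subst; lra. Qed.

Lemma step_u d m eta u v y W r (Hy: y=1\/y=-1) (Huv: inner d u v = 0) :
  inner d (gd_step d m eta u v y W y r) (scal y u) = inner d (W y r)(scal y u)
  + eta*(1 - y*fnet d m u v y W) * dact(inner d (W y r)(scal y u)) * sqnorm d u / INR m.
Proof.
  rewrite inner_step, !inner_scal_r, (inner_comm d v u), Huv. unfold sqnorm.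
  destruct Hy; subst; unfold Rdiv; ring.
Qed.

Lemma step_v d m eta u v y W r (Hy: y=1\/y=-1) (Huv: inner d u v = 0) :
  inner d (gd_step d m eta u v y W y r) (scal y v) = inner d (W y r)(scal y v)
  + eta*(1 - y*fnet d m u v y W) * dact(inner d (W y r)(scal y v)) * sqnorm d v / INR m.
Proof.
  rewrite inner_step, !inner_scal_r, Huv. unfold sqnorm.
  destruct Hy; subst; unfold Rdiv; ring.
Qed.

Lemma decomp d m u v y W (Hy: y=1\/y=-1) : y * fnet d m u v y W =
  / INR m * rsum m (fun r => act (inner d (W y r) (scal y u)))
  + / INR m * rsum m (fun r => act (inner d (W y r) (scal y v))) - Fj d m u v y W (-y).
Proof.
  unfold fnet. destruct Hy; subst.
  - replace (-(1)) with (-1) by ring. unfold Fj at 1. rewrite rsum_plus. ring.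
  - replace (- -1) with 1 by ring. unfold Fj at 2. rewrite rsum_plus. ring.
Qed.

Lemma Fneg_bound d m u v y W (Hm : (0 < m)%nat) :
  (forall r, (r < m)%nat -> inner d (W (-y) r) (scal (-y) u) > -0.1 /\
                           inner d (W (-y) r) (scal (-y) v) > -0.1) ->
  0 <= Fj d m u v y W (-y) <= 0.02.
Proof.
  intros H. unfold Fj. assert (HM: 0 < INR m) by (apply lt_0_INR; auto).
  assert (0 <= rsum m (fun r => act (inner d (W (- y) r) (scal y u)) + act (inner d (W (- y) r) (scal y v))) <= 0.02 * INR m).
  { split.
    - rewrite <- (Rmult_0_l (INR m)), <- rsum_const. apply rsum_le. intros r Hr.
      pose proof (act_nonneg (inner d (W (- y) r) (scal y u))).
      pose proof (act_nonneg (inner d (W (- y) r) (scal y v))). lra.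
    - rewrite <- rsum_const. apply rsum_le. intros i Hi. destruct (H i Hi) as [H1 H2].
      rewrite inner_scal_r in H1, H2.
      assert (inner d (W (- y) i) (scal y u) < 0.1) by (rewrite inner_scal_r; lra).
      assert (inner d (W (- y) i) (scal y v) < 0.1) by (rewrite inner_scal_r; lra).
      pose proof (act_small _ H0). pose proof (act_small _ H3). lra. }
  pose proof (Rinv_0_lt_compat _ HM).
  split. nra.
  apply Rle_trans with (/ INR m * (0.02 * INR m)). nra.
  right. field. lra.
Qed.

Lemma telesc T (l al : nat -> R) c e k :
  (forall s, (s < T)%nat -> c*(l s - e) >= k*(al (S s) - al s)) ->
  c*(rsum T l - e*INR T) >= k*(al T - al 0%nat).
Proof.
  induction T; intros H. simpl. lra.
  assert (c * (rsum T l - e * INR T) >= k * (al T - al 0%nat)) by (apply IHT; auto).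
  pose proof (H T ltac:(lia)). simpl rsum. rewrite S_INR. lra.
Qed.
Theorem mainTheorem10
  (d m : nat) (u v : vec) (y eta delta B : R) (W0 : weights) (t0 t1 : nat)
  (* data: u, v nonzero and orthogonal, y in {+1,-1} *)
  (Hm : (0 < m)%nat)
  (Hu : 0 < sqnorm d u) (Hv : 0 < sqnorm d v) (Huv : inner d u v = 0)
  (Hy : y = 1 \/ y = -1)
  (* (A1) (the conditions on sigma_0 and d are dropped, see NOTES.md) *)
  (Heta_lo : INR m / (4 * sqnorm d u) <= eta)
  (Heta_hi : eta <= 2 * INR m / (5 * sqnorm d u))
  (Hvu : sqrt (sqnorm d v) < 0.01 * sqrt (sqnorm d u))
  (* (A2) *)
  (Hdelta : 0.2 < delta < 0.8)
  (HA2 : forall t : nat,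
      Rabs (y * fnet d m u v y (traj d m eta u v y W0 t) - 1) >= delta)
  (Ht : (t0 <= t1)%nat) (HB : 0 < B)
  (* beta*_u well defined *)
  (Hbeta : 0 < rsum m (fun r => act (inner d (traj d m eta u v y W0 t0 y r) (scal y u))))
  (* (1) neuron sets U_{j,+}, V_{j,+} (hence also U_{j,-}, V_{j,-}) constant on [t0,t1] *)
  (H1 : forall t : nat, (t0 <= t <= t1)%nat -> forall j : R, (j = y \/ j = - y) ->
      forall r : nat, (r < m)%nat ->
      (0 < inner d (traj d m eta u v y W0 t j r) (scal j u)
         <-> 0 < inner d (traj d m eta u v y W0 t0 j r) (scal j u)) /\
      (0 < inner d (traj d m eta u v y W0 t j r) (scal j v)
         <-> 0 < inner d (traj d m eta u v y W0 t0 j r) (scal j v)))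
  (* (2) *)
  (H2 : forall t : nat, (t0 <= t <= t1)%nat ->
      rmax m (fun r => inner d (traj d m eta u v y W0 t y r) (scal y u)) <
      B * sqrt ((rmax m (fun r => act (inner d (traj d m eta u v y W0 t0 y r) (scal y u)))
                 / rsum m (fun r => act (inner d (traj d m eta u v y W0 t0 y r) (scal y u))))
                * INR m))
  (* (3) the minimum over r is > -0.1, i.e. every r satisfies it *)
  (H3 : forall t : nat, (t0 <= t <= t1)%nat -> forall r : nat, (r < m)%nat ->
      inner d (traj d m eta u v y W0 t (- y) r) (scal (- y) u) > -0.1 /\
      inner d (traj d m eta u v y W0 t (- y) r) (scal (- y) v) > -0.1)
  (* (4) *)
  (H4 : forall t : nat, (t0 <= t <= t1)%nat ->
      / INR m * rsum m (fun r => act (inner d (traj d m eta u v y W0 t y r) (scal y v)))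
        < delta)
  (* (5) *)
  (H5 : forall t : nat, (t0 <= t <= t1)%nat ->
      -2 <= 1 - y * fnet d m u v y (traj d m eta u v y W0 t) <= 1) :
  let eps := (delta - delta * sqrt (1.05 - delta)) / 4 in
  rsum (t1 - t0) (fun k => 1 - y * fnet d m u v y (traj d m eta u v y W0 (t0 + k)))
    >= 2 * eps * INR (t1 - t0)
       - INR m * B / (eta * sqnorm d u * sqrt (1.05 - delta))
  /\
  (forall r : nat, (r < m)%nat ->
     inner d (traj d m eta u v y W0 t0 y r) (scal y v) > 0 ->
     inner d (traj d m eta u v y W0 t1 y r) (scal y v) >=
     inner d (traj d m eta u v y W0 t0 y r) (scal y v) *
       exp (eta * sqnorm d v * eps / INR m * INR (t1 - t0)
            - sqnorm d v / sqnorm d u * (B / sqrt (1.05 - delta)))).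
Proof.
  intros eps.
  assert (HM : 0 < INR m) by (apply lt_0_INR; auto).
  set (U := sqnorm d u) in *. set (Vn := sqnorm d v) in *.
  set (T := (t1 - t0)%nat).
  set (tr := traj d m eta u v y W0) in *.
  set (ell := fun t => 1 - y * fnet d m u v y (tr t)).
  set (a := fun r t => inner d (tr t y r) (scal y u)).
  set (bb := fun r t => inner d (tr t y r) (scal y v)).
  set (A := fun t => / INR m * rsum m (fun r => act (a r t))).
  set (al := fun t => sqrt (A t)).
  set (c := 2 * eta * U / INR m).
  set (rho := sqrt (1.05 - delta)) in *.
  assert (Hrho2 : rho * rho = 1.05 - delta) by (apply sqrt_sqrt; lra).
  assert (Hrho0 : 0 < rho) by (apply sqrt_lt_R0; lra).
  assert (Hrho1 : rho < 0.922) by nra.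
  assert (Hrho3 : 0.5 < rho) by nra.
  set (k := (1 + rho) / (2 * rho)).
  assert (Hk : 2 * rho * k = 1 + rho) by (unfold k; field; lra).
  assert (Hk1 : k * rho <= 1) by nra.
  assert (Hk2 : k >= (3 - rho) / 2) by nra.
  assert (Heps : eps = (delta - delta * rho) / 4) by reflexivity.
  assert (Heps1 : eps > 0.0039) by nra.
  assert (HetaU1 : INR m / 4 <= eta * U).
  { assert (INR m / (4 * U) * U = INR m / 4) by (field; lra). nra. }
  assert (HetaU2 : eta * U <= 2 * INR m / 5).
  { assert (2 * INR m / (5 * U) * U = 2 * INR m / 5) by (field; lra). nra. }
  assert (HcM : c * INR m = 2 * eta * U) by (unfold c; field; lra).
  assert (Hc1 : 1/2 <= c) by nra.
  assert (Hc2 : c <= 0.8) by nra.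
  assert (HVU : Vn < 0.0001 * U).
  { pose proof (sqrt_sqrt Vn ltac:(lra)). pose proof (sqrt_sqrt U ltac:(lra)).
    pose proof (sqrt_pos Vn). nra. }
  set (w := Vn / U).
  assert (HwU : w * U = Vn) by (unfold w; field; lra).
  assert (Hw : 0 < w < 0.0001) by (split; nra).
  set (cv := c * w).
  assert (Hcv : 0 < cv < 0.0001) by (unfold cv; split; nra).
  assert (Hy2 : y * y = 1) by (destruct Hy; subst; ring).
  assert (Hsa : forall t r, a r (S t) = a r t + eta * ell t * dact (a r t) * U / INR m).
  { intros t r. unfold a, ell. exact (step_u d m eta u v y (tr t) r Hy Huv). }
  assert (Hsb : forall t r, bb r (S t) = bb r t + eta * ell t * dact (bb r t) * Vn / INR m).
  { intros t r. unfold bb, ell. exact (step_v d m eta u v y (tr t) r Hy Huv). }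
  assert (Hpa : forall t r, (t0 <= t <= t1)%nat -> (r < m)%nat -> (0 < a r t <-> 0 < a r t0)).
  { intros t r Ht' Hr. exact (proj1 (H1 t Ht' y (or_introl eq_refl) r Hr)). }
  assert (Hpb : forall t r, (t0 <= t <= t1)%nat -> (r < m)%nat -> (0 < bb r t <-> 0 < bb r t0)).
  { intros t r Ht' Hr. exact (proj2 (H1 t Ht' y (or_introl eq_refl) r Hr)). }
  assert (HS0 : 0 < rsum m (fun r => act (a r t0))) by exact Hbeta.
  destruct (rsum_pos_ex _ _ HS0) as [r0 [Hr0 Hr0p]].
  assert (Ha0 : 0 < a r0 t0).
  { destruct (Rlt_dec 0 (a r0 t0)); auto. rewrite act_npos in Hr0p; lra. }
  assert (Hstep_pos : forall r t, (t0 <= t < t1)%nat -> (r < m)%nat -> 0 < a r t0 ->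
     a r (S t) = a r t * (1 + c * ell t) /\ 0 < a r t /\ 0 < a r (S t)).
  { intros r t Ht' Hr Hp. split; [|split].
    - rewrite Hsa. unfold dact. rewrite Rmax_left.
      unfold c. field. lra. apply Rlt_le, (proj2 (Hpa t r ltac:(lia) Hr)); auto.
    - apply (proj2 (Hpa t r ltac:(lia) Hr)); auto.
    - apply (proj2 (Hpa (S t) r ltac:(lia) Hr)); auto. }
  assert (Hp : forall t, (t0 <= t < t1)%nat -> 0 < 1 + c * ell t).
  { intros t Ht'. destruct (Hstep_pos r0 t Ht' Hr0 Ha0) as [E [P1 P2]].
    rewrite E in P2. destruct (Rlt_dec 0 (1 + c * ell t)); auto. nra. }
  assert (HAstep : forall t, (t0 <= t < t1)%nat -> A (S t) = A t * (1 + c * ell t)^2).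
  { intros t Ht'. unfold A. rewrite Rmult_assoc. f_equal. rewrite Rmult_comm, <- rsum_scal.
    apply rsum_ext. intros r Hr.
    destruct (Rlt_dec 0 (a r t0)) as [Hq|Hq].
    - destruct (Hstep_pos r t Ht' Hr Hq) as [E [P1 P2]].
      rewrite (act_pos _ P1), (act_pos _ P2), E. ring.
    - assert (~ 0 < a r t) by (rewrite (Hpa t r ltac:(lia) Hr); auto).
      assert (~ 0 < a r (S t)) by (rewrite (Hpa (S t) r ltac:(lia) Hr); auto).
      rewrite (act_npos (a r t)), (act_npos (a r (S t))); lra. }
  assert (HA0 : forall t, 0 <= A t).
  { intros t. unfold A. apply Rmult_le_pos. left; apply Rinv_0_lt_compat; auto.
    rewrite <- (Rmult_0_l (INR m)), <- rsum_const. apply rsum_le. intros; apply act_nonneg. }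
  assert (Halstep : forall t, (t0 <= t < t1)%nat -> al (S t) = al t * (1 + c * ell t)).
  { intros t Ht'. unfold al. rewrite HAstep by auto. rewrite sqrt_mult, sqrt_pow2; auto.
    pose proof (Hp t Ht'); lra. apply pow2_ge_0. }
  assert (Hal2 : forall t, al t * al t = A t) by (intros; apply sqrt_sqrt; auto).
  assert (Hal0 : forall t, 0 <= al t) by (intros; apply sqrt_pos).
  assert (Hdec : forall t, (t0 <= t <= t1)%nat -> exists V F, y * fnet d m u v y (tr t) = A t + V - F
       /\ 0 <= V < delta /\ 0 <= F <= 0.02).
  { intros t Ht'. exists (/ INR m * rsum m (fun r => act (bb r t))), (Fj d m u v y (tr t) (-y)).
    split. apply (decomp d m u v y (tr t) Hy). split; [split|].
    - apply Rmult_le_pos. left; apply Rinv_0_lt_compat; auto.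
      rewrite <- (Rmult_0_l (INR m)), <- rsum_const. apply rsum_le. intros; apply act_nonneg.
    - apply H4; auto.
    - apply Fneg_bound; auto. }
  assert (Hcase : forall t, (t0 <= t <= t1)%nat ->
    (ell t >= delta /\ A t <= 1.02 - delta) \/ (ell t <= - delta /\ A t > 1)).
  { intros t Ht'. destruct (Hdec t Ht') as [V [F [E [HV HF]]]].
    pose proof (HA2 t) as HA. fold tr in HA. unfold ell. rewrite E in *.
    unfold Rabs in HA. destruct (Rcase_abs _) in HA; [left|right]; split; lra. }
  assert (HalB : al t0 < B).
  { pose proof (H2 t0 ltac:(lia)) as H2'. fold (a r0 t0) in H2'.
    change (rmax m (fun r => inner d (tr t0 y r) (scal y u))) with (rmax m (fun r => a r t0)) in H2'.
    change (rmax m (fun r => act (inner d (tr t0 y r) (scal y u)))) with (rmax m (fun r => act (a r t0))) in H2'.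
    change (rsum m (fun r => act (inner d (tr t0 y r) (scal y u)))) with (rsum m (fun r => act (a r t0))) in H2'.
    rewrite (rmax_act m (fun r => a r t0)) in H2'.
    set (z := rmax m (fun r => a r t0)) in *.
    set (S0 := rsum m (fun r => act (a r t0))) in *.
    assert (Hz : 0 < z) by (pose proof (rmax_ge m (fun r => a r t0) r0 Hr0) as Hg; cbv beta in Hg; fold z in Hg; lra).
    rewrite (act_pos _ Hz) in H2'.
    set (q := sqrt (z ^ 2 / S0 * INR m)) in *.
    assert (Hq : q * q = z ^ 2 / S0 * INR m) by (apply sqrt_sqrt; apply Rmult_le_pos; [unfold Rdiv; apply Rmult_le_pos; [nra|left; apply Rinv_0_lt_compat; lra]|lra]).
    assert (Hq0 : 0 <= q) by apply sqrt_pos.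
    assert (z^2 < B^2 * (q * q)) by nra.
    rewrite Hq in H. assert (z^2 * S0 < B^2 * z^2 * INR m).
    { replace (B^2 * z^2 * INR m) with (B ^ 2 * (z ^ 2 / S0 * INR m) * S0) by (field; lra). nra. }
    assert (S0 < B^2 * INR m) by nra.
    assert (HA' : A t0 < B^2).
    { unfold A. fold S0. apply Rmult_lt_reg_l with (INR m); auto.
      rewrite <- Rmult_assoc, Rinv_r; lra. }
    pose proof (Hal2 t0). destruct (Rlt_dec (al t0) B); auto. nra. }
  assert (Hper : forall s, (s < T)%nat ->
     c * (ell (t0 + s)%nat - 2 * eps) >= k * (al (t0 + S s)%nat - al (t0 + s)%nat)).
  { intros s Hs. rewrite Nat.add_succ_r. set (t := (t0 + s)%nat).
    assert (Ht' : (t0 <= t < t1)%nat) by (unfold t, T in *; lia).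
    rewrite Halstep by auto.
    assert (ell t * (1 - k * al t) >= 2 * eps).
    { pose proof (Hal2 t). pose proof (Hal0 t).
      destruct (Hcase t ltac:(lia)) as [[E1 E2]|[E1 E2]].
      - assert (al t < rho) by nra.
        assert (1 - k * al t >= (1 - rho)/2) by nra.
        assert (ell t * (1 - k * al t) >= delta * ((1 - rho)/2)).
        { apply Rle_ge, Rmult_le_compat; lra. }
        rewrite Heps; lra.
      - assert (al t > 1) by nra.
        assert (k * al t - 1 >= (1 - rho)/2) by nra.
        assert ((- ell t) * (k * al t - 1) >= delta * ((1 - rho)/2)).
        { apply Rle_ge, Rmult_le_compat; lra. }
        rewrite Heps; lra. }
    nra. }
  assert (Htel := telesc T (fun s => ell (t0 + s)%nat) (fun s => al (t0 + s)%nat) c (2 * eps) k Hper).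
  simpl in Htel. rewrite Nat.add_0_r in Htel.
  replace (t0 + T)%nat with t1 in Htel by (unfold T; lia).
  assert (Hsum : c * (rsum T (fun s => ell (t0 + s)%nat) - 2 * eps * INR T) >= - k * B).
  { pose proof (Hal0 t1). assert (0 < k) by nra. nra. }
  assert (Hk0 : 0 < k) by nra.
  assert (HkB : k * B <= B / rho).
  { apply Rmult_le_reg_r with rho; auto. replace (B / rho * rho) with B by (field; lra). nra. }
  split.
  - change (rsum T (fun s => ell (t0 + s)%nat) >= 2 * eps * INR T - INR m * B / (eta * U * rho)).
    assert (HcX : c * (INR m * B / (eta * U * rho)) = 2 * (B / rho)) by (unfold c; field; split; nra).
    assert (HBr : 0 <= B / rho) by (unfold Rdiv; apply Rmult_le_pos; [lra|left; apply Rinv_0_lt_compat; lra]).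
    set (X := INR m * B / (eta * U * rho)) in *.
    set (Sm := rsum T (fun s => ell (t0 + s)%nat)) in *.
    assert (c * (Sm - 2 * eps * INR T + X) >= 0) by nra.
    destruct (Rge_dec Sm (2 * eps * INR T - X)); auto. nra.
  - intros r Hr Hb0. fold (bb r t1) (bb r t0). change (inner d (tr t0 y r) (scal y v)) with (bb r t0) in Hb0.
    set (g := fun q => cv * ell (t0 + q)%nat - 2 * (cv * ell (t0 + q)%nat) ^ 2).
    assert (Hind : forall s, (s <= T)%nat -> bb r (t0 + s)%nat >= bb r t0 * exp (rsum s g)).
    { induction s; intros Hs.
      - simpl. rewrite Nat.add_0_r, exp_0. lra.
      - rewrite Nat.add_succ_r. set (t := (t0 + s)%nat) in *.
        assert (Ht' : (t0 <= t < t1)%nat) by (unfold t, T in *; lia).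
        assert (Hbt : 0 < bb r t) by (apply (proj2 (Hpb t r ltac:(lia) Hr)); auto).
        assert (E : bb r (S t) = bb r t * (1 + cv * ell t)).
        { rewrite Hsb. unfold dact. rewrite Rmax_left by lra. unfold cv, c, w. field. split; lra. }
        assert (Hl : -2 <= ell t <= 1) by (apply H5; lia).
        assert (Hq : exp (g s) <= 1 + cv * ell t) by (apply exp_quad; nra).
        pose proof (IHs ltac:(lia)) as IH. fold t in IH.
        simpl rsum. rewrite exp_plus, E.
        pose proof (exp_pos (rsum s g)). pose proof (exp_pos (g s)).
        assert (0 <= bb r t0 * exp (rsum s g)) by nra.
        apply Rle_ge. rewrite <- Rmult_assoc. apply Rmult_le_compat; nra. }
    pose proof (Hind T (le_n _)) as HT. replace (t0 + T)%nat with t1 in HT by (unfold T; lia).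
    eapply Rge_trans; [exact HT|]. apply Rle_ge. apply Rmult_le_compat_l; [lra|]. apply exp_mono.
    assert (Hg : rsum T g >= cv * rsum T (fun s => ell (t0 + s)%nat) - 8 * cv ^ 2 * INR T).
    { replace (cv * rsum T (fun s => ell (t0 + s)%nat) - 8 * cv ^ 2 * INR T)
        with (rsum T (fun s => cv * ell (t0 + s)%nat + (- (8 * cv^2)))).
      apply Rle_ge, rsum_le. intros q Hq. unfold g.
      assert (-2 <= ell (t0 + q)%nat <= 1) by (apply H5; unfold T in *; lia).
      assert (ell (t0 + q)%nat ^ 2 <= 4) by nra.
      assert (cv^2 * ell (t0 + q)%nat ^ 2 <= cv^2 * 4) by (apply Rmult_le_compat_l; nra).
      replace ((cv * ell (t0 + q)%nat) ^ 2) with (cv^2 * ell (t0 + q)%nat ^ 2) by ring. lra.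
      rewrite rsum_plus, rsum_scal, rsum_const. ring. }
    assert (HeV : eta * Vn * eps / INR m = cv * eps / 2) by (unfold cv, c, w; field; split; lra).
    rewrite HeV. fold w.
    set (Sm := rsum T (fun s => ell (t0 + s)%nat)) in *.
    assert (HT0 : 0 <= INR T) by apply pos_INR.
    assert (cv * (Sm - 2 * eps * INR T) >= - k * B * w).
    { unfold cv. replace (c * w * (Sm - 2 * eps * INR T)) with (w * (c * (Sm - 2 * eps * INR T))) by ring.
      nra. }
    assert (8 * cv ^ 2 * INR T <= 1.5 * eps * cv * INR T).
    { assert (H8 : 8 * cv <= 1.5 * eps) by lra. assert (0 <= cv * INR T) by nra.
      apply Rmult_le_compat_r with (r := cv * INR T) in H8; auto.
      replace (8 * cv ^ 2 * INR T) with (8 * cv * (cv * INR T)) by ring. lra. }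
    nra.
Qed.
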